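(* Let $x\in Y$. Then the orbit $W^v.x$ is bounded above for $\le_{Q^\vee}$ (i.e. there is $y\in Y$ with $z\le_{Q^\vee}y$ for all $z\in W^v.x$) if and only if $x\in Y^+$.
   Context: $I$ finite, $A=(a_{i,j})$ a generalized Cartan matrix, $X,Y$ dual free $\mathbb Z$-modules of finite rank with free families $(\alpha_i)\subset X$, $(\alpha_i^\vee)\subset Y$, $\alpha_j(\alpha_i^\vee)=a_{i,j}$; $\mathbb A=Y\otimes\mathbb R$; $r_i(v)=v-\alpha_i(v)\alpha_i^\vee$; $W^v=\langle r_i:i\in I\rangle$; $Q^\vee_+=\bigoplus\mathbb N\alpha_i^\vee$, $x\le_{Q^\vee}y$ iff $y-x\in Q^\vee_+$; $C^v_f=\{v:\alpha_i(v)>0\ \forall i\}$; Tits cone $\mathcal T=\bigcup_{w\in W^v}w\overline{C^v_f}$; $Y^+=Y\cap\mathcal T$. *)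

(* Defs.v *)
From HB Require Import structures.
From mathcomp Require Import all_boot all_order all_algebra.
Set Implicit Arguments. Unset Strict Implicit. Unset Printing Implicit Defensive.
Import Order.TTheory GRing.Theory Num.Theory.
Local Open Scope ring_scope.

(* Conventions: I = 'I_m; Y = Z^n realised as 'rV[int]_n; X = Z^n with the
   perfect (dot-product) pairing, so X is the dual of Y. A = Y (x) R is 'rV[R]_n. *)

Definition pairZ (n : nat) (a v : 'rV[int]_n) : int := \sum_(k < n) a 0 k * v 0 k.

Definition pairR (R : realFieldType) (n : nat) (a : 'rV[int]_n) (v : 'rV[R]_n) : R :=
  \sum_(k < n) (a 0 k)%:~R * v 0 k.

Definition cartan (m n : nat) (alpha alphav : 'I_m -> 'rV[int]_n) (i j : 'I_m) : int :=
  pairZ (alpha j) (alphav i).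

Definition is_GCM (m : nat) (A : 'I_m -> 'I_m -> int) : Prop :=
  [/\ (forall i, A i i = 2),
      (forall i j, i != j -> A i j <= 0) &
      (forall i j, A i j = 0 <-> A j i = 0)].

Definition free_family (m n : nat) (f : 'I_m -> 'rV[int]_n) : Prop :=
  forall c : 'I_m -> int, \sum_(i < m) c i *: f i = 0 -> forall i, c i = 0.

Definition rY (m n : nat) (alpha alphav : 'I_m -> 'rV[int]_n) (i : 'I_m)
  (v : 'rV[int]_n) : 'rV[int]_n :=
  v - pairZ (alpha i) v *: alphav i.

Definition rR (R : realFieldType) (m n : nat) (alpha alphav : 'I_m -> 'rV[int]_n)
  (i : 'I_m) (v : 'rV[R]_n) : 'rV[R]_n :=
  v - pairR (alpha i) v *: map_mx intr (alphav i).

(* Elements of W^v: products r_{i_1} ... r_{i_k} (the r_i are involutions, so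
   these words exhaust the generated group). *)
Definition wordY (m n : nat) (alpha alphav : 'I_m -> 'rV[int]_n) (s : seq 'I_m)
  (v : 'rV[int]_n) : 'rV[int]_n :=
  foldr (fun i w => rY alpha alphav i w) v s.

Definition wordR (R : realFieldType) (m n : nat) (alpha alphav : 'I_m -> 'rV[int]_n)
  (s : seq 'I_m) (v : 'rV[R]_n) : 'rV[R]_n :=
  foldr (fun i w => rR alpha alphav i w) v s.

Definition leQv (m n : nat) (alphav : 'I_m -> 'rV[int]_n) (x y : 'rV[int]_n) : Prop :=
  exists c : 'I_m -> nat, y - x = \sum_(i < m) (c i)%:Z *: alphav i.

Definition in_Cf (R : realFieldType) (m n : nat) (alpha : 'I_m -> 'rV[int]_n)
  (v : 'rV[R]_n) : Prop := forall i, 0 < pairR (alpha i) v.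

Definition in_closure_Cf (R : realFieldType) (m n : nat) (alpha : 'I_m -> 'rV[int]_n)
  (v : 'rV[R]_n) : Prop :=
  forall e : R, 0 < e -> exists u : 'rV[R]_n,
    in_Cf alpha u /\ (forall k, `|u 0 k - v 0 k| < e).

Definition in_Tits (R : realFieldType) (m n : nat) (alpha alphav : 'I_m -> 'rV[int]_n)
  (v : 'rV[R]_n) : Prop :=
  exists (s : seq 'I_m) (u : 'rV[R]_n), in_closure_Cf alpha u /\ v = wordR alpha alphav s u.

Arguments in_Tits : clear implicits.
Definition in_Yplus (R : realFieldType) (m n : nat) (alpha alphav : 'I_m -> 'rV[int]_n)
  (x : 'rV[int]_n) : Prop :=
  in_Tits R m n alpha alphav (map_mx intr x).
Arguments in_Yplus : clear implicits.

(* Main.v *)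
Require Import Defs.
From HB Require Import structures.
From mathcomp Require Import all_boot all_order all_algebra.
From mathcomp Require Import zify ring lra.
From Stdlib Require Import Classical.
Set Implicit Arguments. Unset Strict Implicit. Unset Printing Implicit Defensive.
Import Order.TTheory GRing.Theory Num.Theory.
Local Open Scope ring_scope.


Lemma pairZD n (a u v : 'rV[int]_n) : pairZ a (u + v) = pairZ a u + pairZ a v.
Proof. by rewrite /pairZ -big_split /=; apply: eq_bigr => k _; rewrite mxE mulrDr. Qed.

Lemma pairZZ n (a v : 'rV[int]_n) (k : int) : pairZ a (k *: v) = k * pairZ a v.
Proof. rewrite /pairZ mulr_sumr; apply: eq_bigr => l _; rewrite mxE; ring. Qed.

Lemma pairZ0 n (a : 'rV[int]_n) : pairZ a 0 = 0.
Proof. by rewrite /pairZ big1 // => k _; rewrite mxE mulr0. Qed.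

Lemma pairZN n (a v : 'rV[int]_n) : pairZ a (- v) = - pairZ a v.
Proof. by rewrite -scaleN1r pairZZ mulN1r. Qed.

Lemma pairZB n (a u v : 'rV[int]_n) : pairZ a (u - v) = pairZ a u - pairZ a v.
Proof. by rewrite pairZD pairZN. Qed.

Lemma pairZ_sum n (a : 'rV[int]_n) I (r : seq I) (P : pred I) (F : I -> 'rV[int]_n) :
  pairZ a (\sum_(k <- r | P k) F k) = \sum_(k <- r | P k) pairZ a (F k).
Proof.
elim/big_rec2: _ => [|k y1 y2 _ <-]; first by rewrite pairZ0.
by rewrite pairZD.
Qed.


Lemma rYD m n (alpha alphav : 'I_m -> 'rV[int]_n) i u v :
  rY alpha alphav i (u + v) = rY alpha alphav i u + rY alpha alphav i v.
Proof. rewrite /rY pairZD scalerDl; set a := _ *: _; set b := _ *: _. 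
rewrite opprD !addrA; congr (_ + _); rewrite -!addrA; congr (_ + _); by rewrite addrC. Qed.

Lemma rYZ m n (alpha alphav : 'I_m -> 'rV[int]_n) i (k : int) v :
  rY alpha alphav i (k *: v) = k *: rY alpha alphav i v.
Proof. by rewrite /rY pairZZ scalerBr scalerA. Qed.

Lemma rY0 m n (alpha alphav : 'I_m -> 'rV[int]_n) i : rY alpha alphav i 0 = 0.
Proof. by rewrite /rY pairZ0 scale0r subr0. Qed.

Lemma wordY_cat m n (alpha alphav : 'I_m -> 'rV[int]_n) s t v :
  wordY alpha alphav (s ++ t) v = wordY alpha alphav s (wordY alpha alphav t v).
Proof. by rewrite /wordY foldr_cat. Qed.

Lemma wordY_rcons m n (alpha alphav : 'I_m -> 'rV[int]_n) s i v :
  wordY alpha alphav (rcons s i) v = wordY alpha alphav s (rY alpha alphav i v).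
Proof. by rewrite -cats1 wordY_cat. Qed.

Lemma wordYD m n (alpha alphav : 'I_m -> 'rV[int]_n) s u v :
  wordY alpha alphav s (u + v) = wordY alpha alphav s u + wordY alpha alphav s v.
Proof. by elim: s => //= i s ->; rewrite rYD. Qed.

Lemma wordYZ m n (alpha alphav : 'I_m -> 'rV[int]_n) s (k : int) v :
  wordY alpha alphav s (k *: v) = k *: wordY alpha alphav s v.
Proof. by elim: s => //= i s ->; rewrite rYZ. Qed.

Lemma wordY0 m n (alpha alphav : 'I_m -> 'rV[int]_n) s : wordY alpha alphav s 0 = 0.
Proof. by elim: s => //= i s ->; rewrite rY0. Qed.

Lemma wordYN m n (alpha alphav : 'I_m -> 'rV[int]_n) s v :
  wordY alpha alphav s (- v) = - wordY alpha alphav s v.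
Proof. by rewrite -scaleN1r wordYZ scaleN1r. Qed.

Lemma wordYB m n (alpha alphav : 'I_m -> 'rV[int]_n) s u v :
  wordY alpha alphav s (u - v) = wordY alpha alphav s u - wordY alpha alphav s v.
Proof. by rewrite wordYD wordYN. Qed.

Lemma wordY_sum m n (alpha alphav : 'I_m -> 'rV[int]_n) s I (r : seq I) (P : pred I) F :
  wordY alpha alphav s (\sum_(k <- r | P k) F k) = \sum_(k <- r | P k) wordY alpha alphav s (F k).
Proof.
elim/big_rec2: _ => [|k y1 y2 _ <-]; first by rewrite wordY0.
by rewrite wordYD.
Qed.

Lemma rYK m n (alpha alphav : 'I_m -> 'rV[int]_n) (h2 : forall i, cartan alpha alphav i i = 2) i v :
  rY alpha alphav i (rY alpha alphav i v) = v.
Proof.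
rewrite /rY pairZB pairZZ; have := h2 i; rewrite /cartan => ->.
set a := pairZ _ _. rewrite (_ : a - a * 2 = - a); last ring.
by rewrite scaleNr opprK subrK.
Qed.


Lemma det_rank1 n (a c : 'rV[int]_n) :
  \det (1%:M - a^T *m c) = 1 - (c *m a^T) 0 0.
Proof.
have E1 : block_mx 1%:M a^T c 1%:M =
  block_mx 1%:M 0 c 1%:M *m block_mx 1%:M a^T 0 (1%:M - c *m a^T).
  rewrite mulmx_block !mul1mx !mul0mx ?mulmx1 ?mulmx0 ?addr0 ?add0r. by rewrite addrC subrK.
have E2 : block_mx 1%:M a^T c 1%:M =
  block_mx (1%:M - a^T *m c) a^T 0 1%:M *m block_mx 1%:M 0 c 1%:M.
  rewrite mulmx_block !mul1mx !mul0mx ?mulmx1 ?mulmx0 ?addr0 ?add0r. by rewrite subrK.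
have := congr1 determinant (etrans (esym E1) E2).
rewrite !det_mulmx !det_lblock !det_ublock !det1 !mul1r ?mulr1 => <-.
by rewrite det_mx11 !mxE eqxx.
Qed.

Definition MR m n (alpha alphav : 'I_m -> 'rV[int]_n) i : 'M[int]_n :=
  1%:M - (alpha i)^T *m alphav i.

Definition MW m n (alpha alphav : 'I_m -> 'rV[int]_n) (s : seq 'I_m) : 'M[int]_n :=
  foldr (fun i M => M *m MR alpha alphav i) 1%:M s.

Lemma pairZE n (a v : 'rV[int]_n) : pairZ a v = (v *m a^T) 0 0.
Proof. by rewrite /pairZ mxE; apply: eq_bigr => k _; rewrite mxE mulrC. Qed.

Lemma rY_MR m n (alpha alphav : 'I_m -> 'rV[int]_n) i v :
  rY alpha alphav i v = v *m MR alpha alphav i.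
Proof.
rewrite /rY /MR mulmxBr mulmx1 mulmxA pairZE; congr (_ - _).
by rewrite [v *m _^T]mx11_scalar mul_scalar_mx mxE eqxx mulr1n.
Qed.

Lemma wordY_MW m n (alpha alphav : 'I_m -> 'rV[int]_n) s v :
  wordY alpha alphav s v = v *m MW alpha alphav s.
Proof. by elim: s => [|i s IH] /=; rewrite ?mulmx1 // IH rY_MR mulmxA. Qed.

Lemma det_MW m n (alpha alphav : 'I_m -> 'rV[int]_n)
  (h2 : forall i, cartan alpha alphav i i = 2) s :
  \det (MW alpha alphav s) = (-1) ^+ size s.
Proof.
elim: s => [|i s IH] /=; first by rewrite det1 expr0.
rewrite det_mulmx IH /MR det_rank1 -pairZE.
by have := h2 i; rewrite /cartan => ->; rewrite exprS mulrC.
Qed.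

Lemma eqw_odd m n (alpha alphav : 'I_m -> 'rV[int]_n)
  (h2 : forall i, cartan alpha alphav i i = 2) s t :
  (forall v, wordY alpha alphav s v = wordY alpha alphav t v) ->
  odd (size s) = odd (size t).
Proof.
move=> E.
have EM : MW alpha alphav s = MW alpha alphav t.
  apply/row_matrixP => k; rewrite !rowE -!wordY_MW; exact: E.
have := congr1 determinant EM; rewrite !det_MW //.
rewrite -(signr_odd _ (size s)) -(signr_odd _ (size t)).
by case: (odd _); case: (odd _) => //= /eqP; rewrite ?expr1 ?expr0 // -?subr_eq0 ?opprK; 
  rewrite ?(_ : (-1 : int) - 1 = -2) // ?(_ : (1 : int) - -1 = 2).
Qed.


Definition stI (X aji : int) (ab : int * int) := (- ab.1 - X - aji * ab.2, ab.2).
Definition stJ (Y aij : int) (ab : int * int) := (ab.1, - ab.2 - Y - aij * ab.1).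

Fixpoint Fb (X Y aij aji : int) (t : seq bool) (ab : int * int) : int * int :=
  if t is b :: t' then (if b then stI X aji else stJ Y aij) (Fb X Y aij aji t' ab) else ab.

Lemma Fb_rcons X Y aij aji t b ab :
  Fb X Y aij aji (rcons t b) ab = Fb X Y aij aji t ((if b then stI X aji else stJ Y aij) ab).
Proof. by elim: t => //= c t ->. Qed.

Definition bI m (i j : 'I_m) (b : bool) := if b then i else j.

Lemma wordY_Fb m n (alpha alphav : 'I_m -> 'rV[int]_n) (i j : 'I_m)
  (hi : cartan alpha alphav i i = 2) (hj : cartan alpha alphav j j = 2)
  (t : seq bool) v (A B : int) :
  wordY alpha alphav (map (bI i j) t) (v + A *: alphav i + B *: alphav j) =
  v + (Fb (pairZ (alpha i) v) (pairZ (alpha j) v) (cartan alpha alphav i j)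
         (cartan alpha alphav j i) t (A, B)).1 *: alphav i
    + (Fb (pairZ (alpha i) v) (pairZ (alpha j) v) (cartan alpha alphav i j)
         (cartan alpha alphav j i) t (A, B)).2 *: alphav j.
Proof.
elim: t => //= b t ->.
move: hi hj; rewrite /cartan => hi hj.
set F := Fb _ _ _ _ _ _; case: b; rewrite /rY /bI /= !pairZD !pairZZ ?hi ?hj;
  apply/rowP => k; rewrite !mxE; ring.
Qed.

Fixpoint altb (b : bool) (L : nat) : seq bool :=
  if L is L'.+1 then rcons (altb (~~ b) L') b else [::].

Lemma size_altb b L : size (altb b L) = L.
Proof. by elim: L b => //= L IH b; rewrite size_rcons IH. Qed.

Lemma altb_split b a c :
  altb b (a + c) = altb (if odd c then ~~ b else b) a ++ altb b c.
Proof.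
elim: c b => [|c IH] b /=; first by rewrite addn0 cats0.
rewrite addnS /= IH -rcons_cat; congr (rcons (altb _ _ ++ _) _).
by case: (odd c); case: b.
Qed.

Lemma alt_pos_inf (aij aji : int) : aij <= 0 -> aji <= 0 -> 4 <= aij * aji ->
  forall k ab,
  ((0 <= ab.1 /\ 0 <= ab.2 /\ - aji * ab.2 <= 2 * ab.1) ->
     0 <= (Fb 0 0 aij aji (altb false k) ab).1 /\ 0 <= (Fb 0 0 aij aji (altb false k) ab).2) /\
  ((0 <= ab.1 /\ 0 <= ab.2 /\ - aij * ab.1 <= 2 * ab.2) ->
     0 <= (Fb 0 0 aij aji (altb true k) ab).1 /\ 0 <= (Fb 0 0 aij aji (altb true k) ab).2).
Proof.
move=> hij hji h4; elim=> [|k IH] [A B] /=; first by split=> [[? [? ?]]|[? [? ?]]].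
rewrite !Fb_rcons /=; split=> [[hA [hB hI]]|[hA [hB hI]]].
- apply: (proj2 (IH _)) => /=; nia.
- apply: (proj1 (IH _)) => /=; nia.
Qed.


Definition eqw m n (alpha alphav : 'I_m -> 'rV[int]_n) (s t : seq 'I_m) :=
  forall v, wordY alpha alphav s v = wordY alpha alphav t v.

Lemma eqw_catl m n (alpha alphav : 'I_m -> 'rV[int]_n) p s t :
  eqw alpha alphav s t -> eqw alpha alphav (p ++ s) (p ++ t).
Proof. by move=> E v; rewrite !wordY_cat E. Qed.

Lemma eqw_catr m n (alpha alphav : 'I_m -> 'rV[int]_n) p s t :
  eqw alpha alphav s t -> eqw alpha alphav (s ++ p) (t ++ p).
Proof. by move=> E v; rewrite !wordY_cat E. Qed.

Lemma eqw_rcons2 m n (alpha alphav : 'I_m -> 'rV[int]_n)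
  (h2 : forall i, cartan alpha alphav i i = 2) s i :
  eqw alpha alphav (rcons (rcons s i) i) s.
Proof. by move=> v; rewrite !wordY_rcons rYK. Qed.

Lemma alt_shape m n (alpha alphav : 'I_m -> 'rV[int]_n)
  (h2 : forall i, cartan alpha alphav i i = 2) (i j : 'I_m) tb : forall b,
  (forall tb', eqw alpha alphav (map (bI i j) tb') (map (bI i j) tb) ->
      (size tb <= size tb')%N) ->
  (forall tb0, tb <> rcons tb0 (~~ b)) ->
  tb = altb b (size tb).
Proof.
elim/last_ind: tb => [//|tb0 c IH] b Ha Hb.
have cb : c = b by case: c b Hb {Ha} => [] [] // /(_ tb0).
subst c.
rewrite size_rcons /= (IH (~~ b)) ?size_altb //.
- move=> tb' E; have := Ha (rcons tb' b).
  rewrite !map_rcons !size_rcons ltnS; apply=> v; by rewrite !wordY_rcons E.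
- move=> tb1; rewrite negbK => e; subst tb0; have := Ha tb1.
  rewrite !map_rcons !size_rcons.
  move=> /(_ (fun v => esym (eqw_rcons2 h2 (map (bI i j) tb1) (bI i j b) v))).
  lia.
Qed.


Definition FbEq (aij aji : int) m0 :=
  forall X Y, Fb X Y aij aji (altb true m0) (0,0) = Fb X Y aij aji (altb false m0) (0,0).

Definition FbPos (aij aji : int) k :=
  0 <= (Fb 0 0 aij aji (altb false k) (1,0)).1 /\ 0 <= (Fb 0 0 aij aji (altb false k) (1,0)).2.

Ltac fbeq := move=> X Y; rewrite /= /stI /stJ /=; congr pair; ring.
Ltac fbpos := rewrite /FbPos; do 7 (case=> [|]; first by []); by [].

Lemma dih_cases (aij aji : int) k : aij <= 0 -> aji <= 0 -> (aij == 0) = (aji == 0) ->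
  FbPos aij aji k \/ (exists m0, (0 < m0 <= k)%N /\ FbEq aij aji m0).
Proof.
move=> hij hji hz.
case: (lerP 4 (aij * aji)) => h4.
  by left; apply: (proj1 (alt_pos_inf hij hji h4 k (1,0))) => /=; lia.
have [e0|n0] := eqVneq aij 0.
  move: hz; rewrite e0 eqxx => /esym/eqP e1; subst.
  case: (ltnP k 2) => hk; [left; move: k hk; fbpos | right; exists 2%N; split; [by rewrite hk | fbeq]].
move: hz; rewrite (negbTE n0) => /esym/negbT n1.
have hij' : -3 <= aij <= -1 by apply/andP; split; nia.
have hji' : -3 <= aji <= -1 by apply/andP; split; nia.
have : aij = -1 \/ aij = -2 \/ aij = -3 by lia.
have : aji = -1 \/ aji = -2 \/ aji = -3 by lia.
move=> [e1|[e1|e1]] [e2|[e2|e2]]; subst; rewrite ?mulrNN ?mul1r ?mulr1 // in h4.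
all: try (move: h4; rewrite ?mulrNN ?mulr1 ?mul1r; lia).
- case: (ltnP k 3) => hk; [left; move: k hk; fbpos | right; exists 3%N; split; [by rewrite hk | fbeq]].
- case: (ltnP k 4) => hk; [left; move: k hk; fbpos | right; exists 4%N; split; [by rewrite hk | fbeq]].
- case: (ltnP k 6) => hk; [left; move: k hk; fbpos | right; exists 6%N; split; [by rewrite hk | fbeq]].
- case: (ltnP k 4) => hk; [left; move: k hk; fbpos | right; exists 4%N; split; [by rewrite hk | fbeq]].
- case: (ltnP k 6) => hk; [left; move: k hk; fbpos | right; exists 6%N; split; [by rewrite hk | fbeq]].
Qed.


Lemma braid_of_Fb m n (alpha alphav : 'I_m -> 'rV[int]_n) (i j : 'I_m)
  (hi : cartan alpha alphav i i = 2) (hj : cartan alpha alphav j j = 2) m0 :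
  FbEq (cartan alpha alphav i j) (cartan alpha alphav j i) m0 ->
  eqw alpha alphav (map (bI i j) (altb true m0)) (map (bI i j) (altb false m0)).
Proof.
move=> H v.
have := wordY_Fb hi hj (altb true m0) v 0 0; rewrite !scale0r !addr0 => ->.
have := wordY_Fb hi hj (altb false m0) v 0 0; rewrite !scale0r !addr0 => ->.
by rewrite H.
Qed.

Lemma braid_short m n (alpha alphav : 'I_m -> 'rV[int]_n)
  (h2 : forall i, cartan alpha alphav i i = 2) (i j : 'I_m) m0
  (Hbr : eqw alpha alphav (map (bI i j) (altb true m0)) (map (bI i j) (altb false m0)))
  (hm0 : (0 < m0)%N) k (hk : (m0 <= k)%N) :
  exists tb', eqw alpha alphav (map (bI i j) tb') (rcons (map (bI i j) (altb false k)) i)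
    /\ size tb' = k.-1.
Proof.
case: m0 hm0 Hbr hk => // m1 _ Hbr hk.
have ek : k.+1 = ((k - m1.+1) + m1.+2)%N by lia.
exists (altb (if odd m1.+2 then ~~ true else true) (k - m1.+1) ++ altb false m1).
split; last by rewrite size_cat !size_altb; lia.
have -> : rcons (map (bI i j) (altb false k)) i = map (bI i j) (altb true k.+1).
  by rewrite /= map_rcons.
rewrite ek altb_split !map_cat; apply: eqw_catl.
move=> v.
rewrite (_ : altb true m1.+2 = rcons (altb false m1.+1) true) // map_rcons wordY_rcons -Hbr.
by rewrite (_ : altb true m1.+1 = rcons (altb false m1) true) // map_rcons wordY_rcons /bI /= rYK.
Qed.

Lemma dihedral m n (alpha alphav : 'I_m -> 'rV[int]_n)
  (hGCM : is_GCM (cartan alpha alphav)) (i j : 'I_m) (hij : i != j) tb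
  (Ha : forall tb', eqw alpha alphav (map (bI i j) tb') (map (bI i j) tb) ->
      (size tb <= size tb')%N)
  (Hb : forall tb', eqw alpha alphav (map (bI i j) tb') (rcons (map (bI i j) tb) i) ->
      (size tb < size tb')%N) :
  exists a b : nat, wordY alpha alphav (map (bI i j) tb) (alphav i) =
    a%:Z *: alphav i + b%:Z *: alphav j.
Proof.
case: hGCM => h2 hneg hz.
have Hnot : forall tb0, tb <> rcons tb0 (~~ false).
  move=> tb0 e; subst tb.
  suff E : eqw alpha alphav (map (bI i j) tb0) (rcons (map (bI i j) (rcons tb0 (~~ false))) i).
    by have := Hb tb0 E; rewrite size_rcons ltnNge leqnSn.
  by move=> v; rewrite map_rcons /bI /= -/(bI i j) (eqw_rcons2 h2).
have Etb := alt_shape h2 Ha Hnot.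
have hij' : cartan alpha alphav i j <= 0 := hneg i j hij.
have hji' : cartan alpha alphav j i <= 0 by apply: hneg; rewrite eq_sym.
have hz' : (cartan alpha alphav i j == 0) = (cartan alpha alphav j i == 0).
  by apply/idP/idP => /eqP H; apply/eqP; apply (hz i j).
case: (dih_cases (size tb) hij' hji' hz') => [[p1 p2] | [m0 [/andP [hm0 hmk] hEq]]].
- have := wordY_Fb (h2 i) (h2 j) tb 0 1 0.
  rewrite !pairZ0 !scale0r scale1r !addr0 add0r => ->.
  rewrite -Etb in p1 p2.
  exists `|(Fb 0 0 (cartan alpha alphav i j) (cartan alpha alphav j i) tb (1%:Z, 0%:Z)).1|%N.
  exists `|(Fb 0 0 (cartan alpha alphav i j) (cartan alpha alphav j i) tb (1%:Z, 0%:Z)).2|%N.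
  by rewrite !gez0_abs // add0r.
- have Hbr := braid_of_Fb (h2 i) (h2 j) hEq.
  have [tb' [E s]] := braid_short h2 Hbr hm0 hmk.
  rewrite -Etb in E; have := Hb tb' E; rewrite s; lia.
Qed.


Lemma classic_min (P : nat -> Prop) n : P n -> exists k, P k /\ forall l, (l < k)%N -> ~ P l.
Proof.
elim/ltn_ind: n => n IH Pn.
case: (classic (exists l, (l < n)%N /\ P l)) => [[l [hl Pl]]|H].
  exact: IH hl Pl.
exists n; split => // l hl Pl; apply: H; by exists l.
Qed.

Definition reduced m n (alpha alphav : 'I_m -> 'rV[int]_n) (s : seq 'I_m) :=
  forall t, eqw alpha alphav t s -> (size s <= size t)%N.

Definition Npos m n (alphav : 'I_m -> 'rV[int]_n) (z : 'rV[int]_n) :=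
  exists c : 'I_m -> nat, z = \sum_(l < m) (c l)%:Z *: alphav l.

Lemma Npos_add m n (alphav : 'I_m -> 'rV[int]_n) x y :
  Npos alphav x -> Npos alphav y -> Npos alphav (x + y).
Proof.
move=> [c ->] [d ->]; exists (fun l => (c l + d l)%N); rewrite -big_split /=.
by apply: eq_bigr => l _; rewrite PoszD scalerDl.
Qed.

Lemma Npos_scale m n (alphav : 'I_m -> 'rV[int]_n) (a : nat) x :
  Npos alphav x -> Npos alphav (a%:Z *: x).
Proof.
move=> [c ->]; exists (fun l => (a * c l)%N); rewrite scaler_sumr.
by apply: eq_bigr => l _; rewrite scalerA PoszM.
Qed.

Lemma Npos_base m n (alphav : 'I_m -> 'rV[int]_n) i : Npos alphav (alphav i).
Proof.
exists (fun l => nat_of_bool (l == i)); rewrite (bigD1 i) //= eqxx scale1r big1 ?addr0 //.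
by move=> l /negbTE ->; rewrite scale0r.
Qed.

Lemma reduced_prefix m n (alpha alphav : 'I_m -> 'rV[int]_n) s i :
  reduced alpha alphav (rcons s i) -> reduced alpha alphav s.
Proof.
move=> R t E; have := R (rcons t i); rewrite !size_rcons ltnS; apply=> v.
by rewrite !wordY_rcons E.
Qed.

Lemma wordY_linC m n (alpha alphav : 'I_m -> 'rV[int]_n) s (a b : int) x y :
  wordY alpha alphav s (a *: x + b *: y) = a *: wordY alpha alphav s x + b *: wordY alpha alphav s y.
Proof. by rewrite wordYD !wordYZ. Qed.

Lemma mainH m n (alpha alphav : 'I_m -> 'rV[int]_n)
  (hGCM : is_GCM (cartan alpha alphav)) :
  forall k s i, (size s <= k)%N -> reduced alpha alphav (rcons s i) ->
  Npos alphav (wordY alpha alphav s (alphav i)).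
Proof.
have h2 : forall i, cartan alpha alphav i i = 2 by case: hGCM.
elim=> [|k IH] s i.
  by rewrite leqn0 => /nilP -> _; apply: Npos_base.
case/lastP: s => [_ _|s0 j hs R]; first by apply: Npos_base.
set s := rcons s0 j.
have Rs : reduced alpha alphav s := reduced_prefix R.
have hji : j != i.
  apply/negP => /eqP e; subst j.
  have := R s0; rewrite !size_rcons => /(_ (fun v => esym (eqw_rcons2 h2 s0 i v))); lia.
pose P l := exists v tb, eqw alpha alphav (v ++ map (bI i j) tb) s /\
   (size v + size tb = size s)%N /\ size v = l.
have P0 : P (size s0).
  exists s0, [:: false]; split; last by rewrite /s size_rcons addn1.
  by move=> z; rewrite /s -cats1.
have [l0 [[v [tb [Ev [Sv Lv]]]] Min]] := classic_min P0.
subst l0.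
have Rv : forall b, reduced alpha alphav (rcons v (bI i j b)).
  move=> b t Et; case: (leqP (size (rcons v (bI i j b))) (size t)) => // hlt.
  exfalso.
  have od := eqw_odd h2 Et; rewrite size_rcons /= in od hlt.
  have hlt' : (size t < size v)%N.
    rewrite ltnS leq_eqVlt in hlt; case/orP: hlt => // /eqP e.
    by move: od; rewrite e; case: (odd _).
  have Et' : eqw alpha alphav (t ++ map (bI i j) (b :: tb)) s.
    move=> z; rewrite wordY_cat /= Et wordY_rcons rYK // -wordY_cat; exact: Ev.
  have := Rs _ Et'; rewrite size_cat /= => hs'.
  apply: (Min (size t)) => //; exists t, (b :: tb); split => //; split => //=; rewrite size_map in hs'; lia.
have IHv : forall b, Npos alphav (wordY alpha alphav v (alphav (bI i j b))).
  move=> b; apply: IH (Rv b).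
  have : (size v <= size s0)%N by case: (leqP (size v) (size s0)) => // /Min.
  move: hs; rewrite size_rcons; lia.
have Ha : forall tb', eqw alpha alphav (map (bI i j) tb') (map (bI i j) tb) ->
      (size tb <= size tb')%N.
  move=> tb' E; have := Rs (v ++ map (bI i j) tb').
  rewrite size_cat size_map -Sv leq_add2l; apply => z.
  by rewrite wordY_cat E -wordY_cat Ev.
have Hb : forall tb', eqw alpha alphav (map (bI i j) tb') (rcons (map (bI i j) tb) i) ->
      (size tb < size tb')%N.
  move=> tb' E; have := R (v ++ map (bI i j) tb').
  rewrite size_cat size_map size_rcons -Sv -addnS leq_add2l; apply => z.
  by rewrite wordY_cat E wordY_rcons -wordY_cat Ev wordY_rcons.
have hij : i != j by rewrite eq_sym.
have [a [b' Eab]] := dihedral hGCM hij Ha Hb.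
have -> : wordY alpha alphav s (alphav i) = a%:Z *: wordY alpha alphav v (alphav i) + b'%:Z *: wordY alpha alphav v (alphav j).
  by rewrite -Ev wordY_cat Eab wordY_linC.
apply: Npos_add; apply: Npos_scale; [exact: (IHv true) | exact: (IHv false)].
Qed.


Definition AQ m n (alpha : 'I_m -> 'rV[int]_n) : 'M[rat]_(m, n) :=
  \matrix_(i, k) ((alpha i 0 k)%:~R : rat).

Lemma AQ_free m n (alpha : 'I_m -> 'rV[int]_n) (hfree : free_family alpha) :
  row_free (AQ alpha).
Proof.
apply: inj_row_free => v Hv.
pose D : int := \prod_(l < m) denq (v 0 l).
have D0 : (D%:~R : rat) != 0.
  rewrite intr_eq0 /D; apply/prodf_neq0 => l _; exact: denq_neq0.
pose c i : int := numq (v 0 i) * \prod_(l < m | l != i) denq (v 0 l).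
have Ec : forall i, (c i)%:~R = v 0 i * D%:~R :> rat.
  move=> i; rewrite /c /D [in RHS](bigD1 i) //= !intrM numqE -mulrA.
  done.
have Hc : \sum_(i < m) c i *: alpha i = 0.
  apply/rowP => k; rewrite !mxE summxE; apply: (@intr_inj rat).
  rewrite rmorph_sum rmorph0 /=.
  have := congr1 (fun M : 'M[rat]_(1, n) => (M 0 k * D%:~R)) Hv; rewrite /= !mxE mul0r => H0.
  rewrite -[RHS]H0 mulr_suml; apply: eq_bigr => i _; rewrite !mxE intrM Ec; ring.
apply/rowP => i; rewrite mxE; have := hfree _ Hc i => /(congr1 (fun z => (z%:~R : rat))).
rewrite Ec rmorph0 => /eqP; rewrite mulf_eq0 (negbTE D0) orbF => /eqP //.
Qed.

Lemma Cf_nonempty (R : realFieldType) m n (alpha : 'I_m -> 'rV[int]_n)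
  (hfree : free_family alpha) : exists u : 'rV[R]_n, in_Cf alpha u.
Proof.
pose AR := map_mx (@ratr R) (AQ alpha).
have rk : \rank AR^T = m.
  by rewrite mxrank_tr mxrank_map; apply/eqP; exact: (AQ_free hfree).
have full : row_full AR^T by rewrite /row_full rk.
have /submxP [D E] := submx_full (const_mx 1 : 'rV[R]_m) full.
exists D => i.
have H : pairR (alpha i) D = 1.
  transitivity ((D *m AR^T) 0 i); last by rewrite -E mxE.
  by rewrite /pairR mxE; apply: eq_bigr => k _; rewrite !mxE ratr_int mulrC.
by rewrite H ltr01.
Qed.


Lemma pairR_map (R : realFieldType) n (a v : 'rV[int]_n) :
  pairR a (map_mx (intr : int -> R) v) = (pairZ a v)%:~R.
Proof.
rewrite /pairR /pairZ rmorph_sum; apply: eq_bigr => k _; by rewrite mxE rmorphM.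
Qed.

Lemma rR_map (R : realFieldType) m n (alpha alphav : 'I_m -> 'rV[int]_n) i v :
  rR alpha alphav i (map_mx (intr : int -> R) v) = map_mx intr (rY alpha alphav i v).
Proof.
rewrite /rR /rY pairR_map; apply/rowP => k; rewrite !mxE intrD intrN intrM; ring.
Qed.

Lemma wordR_map (R : realFieldType) m n (alpha alphav : 'I_m -> 'rV[int]_n) s v :
  wordR alpha alphav s (map_mx (intr : int -> R) v) = map_mx intr (wordY alpha alphav s v).
Proof. by elim: s => //= i s ->; rewrite rR_map. Qed.

Lemma pairRD (R : realFieldType) n (a : 'rV[int]_n) (u v : 'rV[R]_n) :
  pairR a (u + v) = pairR a u + pairR a v.
Proof. by rewrite /pairR -big_split /=; apply: eq_bigr => k _; rewrite mxE mulrDr. Qed.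

Lemma pairRZ (R : realFieldType) n (a : 'rV[int]_n) (v : 'rV[R]_n) (k : R) :
  pairR a (k *: v) = k * pairR a v.
Proof. rewrite /pairR mulr_sumr; apply: eq_bigr => l _; rewrite mxE; ring. Qed.

Lemma rRK (R : realFieldType) m n (alpha alphav : 'I_m -> 'rV[int]_n)
  (h2 : forall i, cartan alpha alphav i i = 2) i (v : 'rV[R]_n) :
  rR alpha alphav i (rR alpha alphav i v) = v.
Proof.
have H : pairR (alpha i) (map_mx (intr : int -> R) (alphav i)) = 2.
  by rewrite pairR_map; have := h2 i; rewrite /cartan => ->.
rewrite /rR -scaleNr pairRD pairRZ H.
apply/rowP => k; rewrite !mxE; ring.
Qed.

Lemma wordR_rev (R : realFieldType) m n (alpha alphav : 'I_m -> 'rV[int]_n)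
  (h2 : forall i, cartan alpha alphav i i = 2) s (u : 'rV[R]_n) :
  wordR alpha alphav (rev s) (wordR alpha alphav s u) = u.
Proof.
elim: s u => //= i s IH u.
rewrite rev_cons /wordR -cats1 foldr_cat /= rRK //; exact: IH.
Qed.

Lemma wordY_rev m n (alpha alphav : 'I_m -> 'rV[int]_n)
  (h2 : forall i, cartan alpha alphav i i = 2) s v :
  wordY alpha alphav (rev s) (wordY alpha alphav s v) = v.
Proof.
elim: s v => //= i s IH v.
by rewrite rev_cons wordY_rcons rYK // IH.
Qed.


Lemma closure_dom (R : realFieldType) m n (alpha : 'I_m -> 'rV[int]_n) (u : 'rV[R]_n) i :
  in_closure_Cf alpha u -> 0 <= pairR (alpha i) u.
Proof.
move=> Hc; rewrite leNgt; apply/negP => hneg.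
set d := - pairR (alpha i) u.
have hd : 0 < d by rewrite oppr_gt0.
set M := \sum_k `|((alpha i 0 k)%:~R : R)|.
have M0 : 0 <= M by apply: sumr_ge0 => k _.
set e := d / (M + 1).
have M1 : 0 < M + 1 by lra.
have he : 0 < e by rewrite divr_gt0.
have [u' [Cu' Du']] := Hc e he.
have E : pairR (alpha i) u' = pairR (alpha i) u +
   \sum_k ((alpha i 0 k)%:~R : R) * (u' 0 k - u 0 k).
  by rewrite /pairR -big_split /=; apply: eq_bigr => k _; ring.
have B : \sum_k ((alpha i 0 k)%:~R : R) * (u' 0 k - u 0 k) <= M * e.
  rewrite /M mulr_suml; apply: ler_sum => k _.
  apply: le_trans (ler_norm _) _; rewrite normrM; apply: ler_wpM2l => //.
  exact: ltW (Du' k).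
have Me : M * e < d.
  rewrite /e mulrA ltr_pdivrMr // mulrDr mulr1 [d * M]mulrC ltrDl //.
have := Cu' i; rewrite E; move: B Me; rewrite /d; lra.
Qed.

Lemma dom_closure (R : realFieldType) m n (alpha : 'I_m -> 'rV[int]_n)
  (hfree : free_family alpha) (z : 'rV[int]_n) :
  (forall i, 0 <= pairZ (alpha i) z) -> in_closure_Cf alpha (map_mx (intr : int -> R) z).
Proof.
move=> hd e he; have [u0 Cu0] := Cf_nonempty R hfree.
set M := \sum_k `|u0 0 k|.
have M0 : 0 <= M by apply: sumr_ge0 => k _.
have M1 : 0 < M + 1 by lra.
set t := e / (M + 1).
have ht : 0 < t by rewrite divr_gt0.
exists (map_mx (intr : int -> R) z + t *: u0); split.
  move=> i; rewrite pairRD pairRZ pairR_map.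
  have h1 : 0 <= (pairZ (alpha i) z)%:~R :> R by rewrite ler0z.
  have := mulr_gt0 ht (Cu0 i); lra.
move=> k; rewrite !mxE.
have -> : (z 0 k)%:~R + t * u0 0 k - (z 0 k)%:~R = t * u0 0 k by ring.
rewrite normrM gtr0_norm //.
have hk : `|u0 0 k| <= M.
  by rewrite /M (bigD1 k) //= lerDl; apply: sumr_ge0.
have tM : t * M < e by rewrite /t mulrAC ltr_pdivrMr //; nra.
have := ler_wpM2l (ltW ht) hk; lra.
Qed.


Lemma dom_bound m n (alpha alphav : 'I_m -> 'rV[int]_n)
  (hGCM : is_GCM (cartan alpha alphav)) x0 (hd : forall i, 0 <= pairZ (alpha i) x0) s :
  Npos alphav (x0 - wordY alpha alphav s x0).
Proof.
pose P l := exists t, eqw alpha alphav t s /\ size t = l.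
have P0 : P (size s) by exists s.
have [l0 [[t [Et St]] Min]] := classic_min P0.
have Rt : reduced alpha alphav t.
  move=> t' E; case: (leqP (size t) (size t')) => // hlt; exfalso.
  apply: (Min (size t')); first by rewrite -St.
  exists t'; split => // v; rewrite E; exact: Et.
rewrite -Et; clear -hGCM hd Rt.
elim/last_ind: t Rt => [_|t1 i IH R].
  by exists (fun _ => 0%N); rewrite /= subrr big1 // => l _; rewrite scale0r.
rewrite wordY_rcons /rY wordYB wordYZ opprB addrA addrAC.
have -> : x0 - wordY alpha alphav t1 x0 + pairZ (alpha i) x0 *: wordY alpha alphav t1 (alphav i)
  = (x0 - wordY alpha alphav t1 x0) + (`|pairZ (alpha i) x0|%N)%:Z *: wordY alpha alphav t1 (alphav i).
  by rewrite gez0_abs.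
apply: Npos_add; first exact: IH (reduced_prefix R).
apply: Npos_scale; exact: (mainH hGCM (leqnn _) R).
Qed.

Lemma Posz_sum m (c : 'I_m -> nat) : ((\sum_l c l)%N)%:Z = \sum_l (c l)%:Z.
Proof. by elim/big_rec2: _ => // l a b _ <-; rewrite PoszD. Qed.

Theorem mainTheorem4 (R : realFieldType) (m n : nat)
  (alpha alphav : 'I_m -> 'rV[int]_n)
  (hGCM : is_GCM (cartan alpha alphav))
  (hfree : free_family alpha) (hfreev : free_family alphav)
  (x : 'rV[int]_n) :
  (exists y : 'rV[int]_n, forall s : seq 'I_m,
      leQv alphav (wordY alpha alphav s x) y)
  <-> in_Yplus R m n alpha alphav x.
Proof.
have h2 : forall i, cartan alpha alphav i i = 2 by case: hGCM.
split.
- move=> [y Hy].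
  pose P h := exists s (c : 'I_m -> nat),
    y - wordY alpha alphav s x = \sum_l (c l)%:Z *: alphav l /\ (\sum_l c l)%N = h.
  have [c Ec] := Hy [::].
  have P0 : P (\sum_l c l)%N by exists [::], c.
  have [h0 [[s0 [c0 [E0 S0]]] Min]] := classic_min P0.
  set z := wordY alpha alphav s0 x.
  have hd : forall i, 0 <= pairZ (alpha i) z.
    move=> i; rewrite leNgt; apply/negP => hneg.
    have [c' Ec'] := Hy (i :: s0).
    set p := pairZ (alpha i) z.
    have key : forall l, (c' l)%:Z - (c0 l)%:Z - (if l == i then p else 0) = 0.
      apply: hfreev.
      have -> : \sum_(l < m) ((c' l)%:Z - (c0 l)%:Z - (if l == i then p else 0)) *: alphav l
        = (\sum_l (c' l)%:Z *: alphav l) - (\sum_l (c0 l)%:Z *: alphav l)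
          - \sum_l (if l == i then p else 0) *: alphav l.
        by rewrite -!sumrB; apply: eq_bigr => l _; rewrite !scalerBl.
      rewrite -Ec' -E0 (bigD1 i) //= eqxx big1 ?addr0; last first.
        by move=> l /negbTE ->; rewrite scale0r.
      by rewrite /= /rY -/z -/p; apply/rowP => k; rewrite !mxE; ring.

    have Hl : forall l, (c' l)%:Z = (c0 l)%:Z + (if l == i then p else 0).
      move=> l; apply/eqP; rewrite -subr_eq0 opprD addrA; apply/eqP; exact: key l.
    have Ssum : ((\sum_l c' l)%N)%:Z = h0%:Z + p.
      rewrite Posz_sum -S0 Posz_sum (eq_bigr _ (fun l _ => Hl l)) big_split /=.
      suff -> : \sum_(l < m) (if l == i then p else 0) = p by [].
      by rewrite (bigD1 i) //= eqxx big1 ?addr0 // => l /negbTE ->.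
    have lt : ((\sum_l c' l) < h0)%N by move: Ssum hneg; lia.
    by apply: (Min _ lt); exists (i :: s0), c'.
  exists (rev s0), (map_mx (intr : int -> R) z); split.
    exact: dom_closure.
  by rewrite wordR_map /z wordY_rev.
- move=> [s [u [Hu Ex]]].
  set x0 := wordY alpha alphav (rev s) x.
  have Eu : u = map_mx (intr : int -> R) x0.
    by rewrite /x0 -wordR_map Ex wordR_rev.
  have hd : forall i, 0 <= pairZ (alpha i) x0.
    by move=> i; have := closure_dom i Hu; rewrite Eu pairR_map ler0z.
  exists x0 => t.
  have Ex0 : x = wordY alpha alphav s x0 by rewrite /x0 -{1}(revK s) wordY_rev.
  rewrite Ex0 -wordY_cat; exact: dom_bound.
Qed.
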